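(* Let $H_1,H_2$ be vertex-disjoint graphs, let $Y_1$ be a minimal blocking set of $H_1$ with $|Y_1|\ge2$, let $Y_2$ be a minimal blocking set of $H_2$, and let $y_1\in Y_1$, $y_2\in Y_2$. Let $H$ be the graph with vertex set $V(H_1)\cup V(H_2)$ and edge set $E(H_1)\cup E(H_2)\cup\{\{y_1,y_2\}\}$. Then $\mathrm{OPT}(H)=\mathrm{OPT}(H_1)+\mathrm{OPT}(H_2)$ and $(Y_1\cup Y_2)\setminus\{y_1,y_2\}$ is a minimal blocking set of $H$.
   Context: $\mathrm{OPT}(G)$ is the minimum vertex cover size. $Y\subseteq V(G)$ is a blocking set of $G$ if no vertex cover of $G$ of size $\mathrm{OPT}(G)$ contains $Y$; minimal if no proper subset is a blocking set. *)

(* Defs.v *)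
From mathcomp Require Import all_boot.
Set Implicit Arguments. Unset Strict Implicit. Unset Printing Implicit Defensive.

Definition simple_graph (T : finType) (e : rel T) : Prop :=
  symmetric e /\ irreflexive e.

Definition vertex_cover (T : finType) (e : rel T) (C : {set T}) : bool :=
  [forall x, forall y, e x y ==> (x \in C) || (y \in C)].

(* OPT(G): minimum size of a vertex cover (setT is always a cover) *)
Definition OPT (T : finType) (e : rel T) : nat :=
  #|[arg min_(C < [set: T] | vertex_cover e C) #|C|]|.

Definition blocking (T : finType) (e : rel T) (Y : {set T}) : Prop :=
  forall C : {set T}, vertex_cover e C -> #|C| = OPT e -> ~ (Y \subset C).

Definition minimal_blocking (T : finType) (e : rel T) (Y : {set T}) : Prop :=
  blocking e Y /\ forall Z : {set T}, Z \proper Y -> ~ blocking e Z.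

Definition join_edge (T1 T2 : finType) (e1 : rel T1) (e2 : rel T2)
  (y1 : T1) (y2 : T2) : rel (T1 + T2)%type :=
  fun u v => match u, v with
  | inl a, inl b => e1 a b
  | inr a, inr b => e2 a b
  | inl a, inr b => (a == y1) && (b == y2)
  | inr a, inl b => (a == y2) && (b == y1)
  end.

(* Main.v *)
Require Import Defs.
From mathcomp Require Import all_boot zify.
Set Implicit Arguments. Unset Strict Implicit.

Lemma vc_setT (T : finType) (e : rel T) : vertex_cover e [set: T].
Proof. by apply/forallP=> x; apply/forallP=> y; rewrite in_setT implybT. Qed.

Lemma OPT_ex (T : finType) (e : rel T) :
  exists C, [/\ vertex_cover e C, #|C| = OPT e & True].
Proof.
rewrite /OPT; case: arg_minnP; first exact: vc_setT.
by move=> C hC _; exists C.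
Qed.

Lemma OPT_le (T : finType) (e : rel T) C : vertex_cover e C -> OPT e <= #|C|.
Proof.
rewrite /OPT; case: arg_minnP; first exact: vc_setT.
by move=> D _ hmin /hmin.
Qed.

Lemma nonblock (T : finType) (e : rel T) Z : ~ blocking e Z ->
  exists C, [/\ vertex_cover e C, #|C| = OPT e & Z \subset C].
Proof.
move=> nb.
case: (boolP [exists C, [&& vertex_cover e C, #|C| == OPT e & Z \subset C]]).
  by case/existsP=> C /and3P [h1 /eqP h2 h3]; exists C.
move/existsPn=> H; exfalso; apply: nb => C h1 h2 h3.
by move: (H C); rewrite h1 h2 eqxx h3.
Qed.

Section Join.
Variables (T1 T2 : finType) (e1 : rel T1) (e2 : rel T2) (y1 : T1) (y2 : T2).
Local Notation e := (join_edge e1 e2 y1 y2).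

Definition Ls (C : {set T1 + T2}) : {set T1} := [set a | inl a \in C].
Definition Rs (C : {set T1 + T2}) : {set T2} := [set b | inr b \in C].
Definition Js (C1 : {set T1}) (C2 : {set T2}) : {set T1 + T2} :=
  (@inl T1 T2) @: C1 :|: (@inr T1 T2) @: C2.

Lemma in_Js C1 C2 x : (x \in Js C1 C2) =
  match x with inl a => a \in C1 | inr b => b \in C2 end.
Proof.
rewrite /Js inE; case: x => [a|b].
  rewrite mem_imset; last by move=> ? ? [].
  by case: (a \in C1) => //=; apply/imsetP => -[].
rewrite mem_imset; last by move=> ? ? [].
by case: (b \in C2); rewrite ?orbT //= orbF; apply/imsetP => -[].
Qed.

Lemma card_Js C1 C2 : #|Js C1 C2| = #|C1| + #|C2|.
Proof.
rewrite /Js cardsU !card_imset; try by move=> ? ? [].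
suff -> : (@inl T1 T2) @: C1 :&: (@inr T1 T2) @: C2 = set0 by rewrite cards0 subn0.
apply/setP => x; rewrite !inE; apply/negP => /andP [/imsetP [a _ ->] /imsetP [b _]] //.
Qed.

Lemma JsK (C : {set T1 + T2}) : Js (Ls C) (Rs C) = C.
Proof. by apply/setP => x; rewrite in_Js; case: x => ?; rewrite inE. Qed.

Lemma Ls_Js C1 C2 : Ls (Js C1 C2) = C1.
Proof. by apply/setP => a; rewrite inE in_Js. Qed.
Lemma Rs_Js C1 C2 : Rs (Js C1 C2) = C2.
Proof. by apply/setP => a; rewrite inE in_Js. Qed.

Lemma card_LR (C : {set T1 + T2}) : #|C| = #|Ls C| + #|Rs C|.
Proof. by rewrite -{1}(JsK C) card_Js. Qed.

Lemma vc_Js C1 C2 : vertex_cover e1 C1 -> vertex_cover e2 C2 ->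
  (y1 \in C1) || (y2 \in C2) -> vertex_cover e (Js C1 C2).
Proof.
move=> h1 h2 h12; apply/forallP=> x; apply/forallP=> y; apply/implyP.
case: x => [a|a]; case: y => [b|b] /=; rewrite !in_Js.
- by move=> hab; move/forallP: h1 => /(_ a) /forallP /(_ b) /implyP; apply.
- by case/andP=> /eqP -> /eqP ->.
- by case/andP=> /eqP -> /eqP ->; rewrite orbC.
- by move=> hab; move/forallP: h2 => /(_ a) /forallP /(_ b) /implyP; apply.
Qed.

Lemma vc_L C : vertex_cover e C -> vertex_cover e1 (Ls C).
Proof.
move=> h; apply/forallP=> a; apply/forallP=> b; apply/implyP => hab.
move/forallP: h => /(_ (inl a)) /forallP /(_ (inl b)) /implyP.
by rewrite !inE; apply.
Qed.

Lemma vc_R C : vertex_cover e C -> vertex_cover e2 (Rs C).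
Proof.
move=> h; apply/forallP=> a; apply/forallP=> b; apply/implyP => hab.
move/forallP: h => /(_ (inr a)) /forallP /(_ (inr b)) /implyP.
by rewrite !inE; apply.
Qed.

Lemma vc_edge C : vertex_cover e C -> (y1 \in Ls C) || (y2 \in Rs C).
Proof.
move=> h; move/forallP: h => /(_ (inl y1)) /forallP /(_ (inr y2)) /implyP.
by rewrite !inE; apply; rewrite /= !eqxx.
Qed.

Lemma OPT_join C1 : vertex_cover e1 C1 -> #|C1| = OPT e1 -> y1 \in C1 ->
  OPT e = OPT e1 + OPT e2.
Proof.
move=> v1 c1 i1; apply/eqP; rewrite eqn_leq; apply/andP; split.
  have [C2 [v2 c2 _]] := OPT_ex e2.
  by rewrite -c1 -c2 -card_Js; apply: OPT_le; apply: vc_Js; rewrite ?i1.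
have [C [v c _]] := OPT_ex e.
by rewrite -c card_LR leq_add // OPT_le // ?vc_L ?vc_R.
Qed.

Definition Yj (Y1 : {set T1}) (Y2 : {set T2}) : {set T1 + T2} :=
  Js Y1 Y2 :\: [set inl y1; inr y2].

Lemma in_Y Y1 Y2 x : (x \in Yj Y1 Y2) =
  match x with inl a => (a != y1) && (a \in Y1)
             | inr b => (b != y2) && (b \in Y2) end.
Proof. by rewrite /Yj inE in_Js; case: x => a; rewrite !inE /= ?orbF. Qed.

Lemma blockY Y1 Y2 : blocking e1 Y1 -> blocking e2 Y2 ->
  (exists C1, [/\ vertex_cover e1 C1, #|C1| = OPT e1 & y1 \in C1]) ->
  blocking e (Yj Y1 Y2).
Proof.
move=> b1 b2 [C1 [v1 c1 i1]] C v c s.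
have opt := OPT_join v1 c1 i1.
have l1 := OPT_le (vc_L v); have l2 := OPT_le (vc_R v).
have cc := card_LR C.
have s12 : #|Ls C| + #|Rs C| = OPT e1 + OPT e2 by rewrite -cc c opt.
have q1 : #|Ls C| = OPT e1 by move: l1 l2 s12; clear; lia.
have q2 : #|Rs C| = OPT e2 by move: l1 l2 s12; clear; lia.
case/orP: (vc_edge v) => h.
  apply: (b1 (Ls C) (vc_L v) q1); apply/subsetP => a ha; rewrite inE.
  case: (eqVneq a y1) => [->| ne]; first by rewrite inE in h.
  by apply: (subsetP s); rewrite in_Y ne ha.
apply: (b2 (Rs C) (vc_R v) q2); apply/subsetP => a ha; rewrite inE.
case: (eqVneq a y2) => [->| ne]; first by rewrite inE in h.
by apply: (subsetP s); rewrite in_Y ne ha.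
Qed.

Lemma minY Y1 Y2 (Z : {set T1 + T2}) : minimal_blocking e1 Y1 -> minimal_blocking e2 Y2 ->
  y1 \in Y1 -> y2 \in Y2 ->
  (exists C1, [/\ vertex_cover e1 C1, #|C1| = OPT e1 & y1 \in C1]) ->
  Z \proper Yj Y1 Y2 -> ~ blocking e Z.
Proof.
move=> [_ m1] [_ m2] hy1 hy2 [D1 [w1 d1 j1]] /properP [sZ [x xY xZ]] nb.
have opt := OPT_join w1 d1 j1.
have LZ : forall a, a \in Ls Z -> (a != y1) && (a \in Y1).
  by move=> a; rewrite inE => /(subsetP sZ); rewrite in_Y.
have RZ : forall a, a \in Rs Z -> (a != y2) && (a \in Y2).
  by move=> a; rewrite inE => /(subsetP sZ); rewrite in_Y.
case: x xY xZ => a; rewrite in_Y => /andP [ne ha] xZ.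
- have p1 : (y1 |: Ls Z) \proper Y1.
    apply/properP; split.
      apply/subsetP => b; rewrite in_setU1; case/orP => [/eqP->//| bz].
      by have /andP [] := LZ b bz.
    by exists a => //; rewrite !inE (negbTE ne).
  have [C1 [v1 c1 s1]] := nonblock (m1 _ p1).
  have p2 : Rs Z \proper Y2.
    apply/properP; split.
      by apply/subsetP => b /RZ /andP [].
    by exists y2 => //; apply/negP => /RZ; rewrite eqxx.
  have [C2 [v2 c2 s2]] := nonblock (m2 _ p2).
  have i1 : y1 \in C1 by apply: (subsetP s1); rewrite !inE eqxx.
  apply: (nb (Js C1 C2)).
  + by apply: vc_Js; rewrite ?i1.
  + by rewrite card_Js c1 c2 opt.
  apply/subsetP => z; rewrite in_Js; case: z => b hb.
    by apply: (subsetP s1); rewrite !inE hb orbT.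
  by apply: (subsetP s2); rewrite inE.
- have p2 : (y2 |: Rs Z) \proper Y2.
    apply/properP; split.
      apply/subsetP => b; rewrite in_setU1; case/orP => [/eqP->//| bz].
      by have /andP [] := RZ b bz.
    by exists a => //; rewrite !inE (negbTE ne).
  have [C2 [v2 c2 s2]] := nonblock (m2 _ p2).
  have p1 : Ls Z \proper Y1.
    apply/properP; split.
      by apply/subsetP => b /LZ /andP [].
    by exists y1 => //; apply/negP => /LZ; rewrite eqxx.
  have [C1 [v1 c1 s1]] := nonblock (m1 _ p1).
  have i2 : y2 \in C2 by apply: (subsetP s2); rewrite !inE eqxx.
  apply: (nb (Js C1 C2)).
  + by apply: vc_Js; rewrite ?i2 ?orbT.
  + by rewrite card_Js c1 c2 opt.
  apply/subsetP => z; rewrite in_Js; case: z => b hb.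
    by apply: (subsetP s1); rewrite inE.
  by apply: (subsetP s2); rewrite !inE hb orbT.
Qed.

End Join.
Unset Implicit Arguments.

Theorem mainTheorem15 (T1 T2 : finType) (e1 : rel T1) (e2 : rel T2)
  (G1 : simple_graph e1) (G2 : simple_graph e2)
  (Y1 : {set T1}) (Y2 : {set T2}) (y1 : T1) (y2 : T2)
  (hY1 : minimal_blocking e1 Y1) (hY1size : 2 <= #|Y1|)
  (hY2 : minimal_blocking e2 Y2)
  (hy1 : y1 \in Y1) (hy2 : y2 \in Y2) :
  OPT (join_edge e1 e2 y1 y2) = OPT e1 + OPT e2 /\
  minimal_blocking (join_edge e1 e2 y1 y2)
    (((@inl T1 T2) @: Y1 :|: (@inr T1 T2) @: Y2) :\: [set inl y1; inr y2]).
Proof.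
have hex : exists C1, [/\ vertex_cover e1 C1, #|C1| = OPT e1 & y1 \in C1].
  have p : [set y1] \proper Y1.
    by rewrite properEcard sub1set hy1 cards1.
  have [C [v c s]] := nonblock (hY1.2 _ p).
  by exists C; split => //; rewrite -sub1set.
have [C1 [v1 c1 i1]] := hex.
split; first exact: OPT_join v1 c1 i1.
change (minimal_blocking (join_edge e1 e2 y1 y2) (Yj y1 y2 Y1 Y2)).
split; first exact: blockY hY1.1 hY2.1 hex.
by move=> Z hZ; apply: minY hY1 hY2 hy1 hy2 hex hZ.
Qed.
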